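(* Consider an HTSP instance in which all speeds are powers of two, and let $M>0$ be at least its optimal makespan. Let $\mathcal H=\bigcup_{i\ge0}H_i$ be a Level-Prim tree with respect to $M$. Then: (a) along every path in $\mathcal H$ from $r$ to a leaf, the vertex levels are non-decreasing; (b) for every $i\ge0$, $\sum_{j\ge i}d(H_j)\le 8M\sum_{j\ge i-1}2^j\mu_j$.
   Context: HTSP: the input is a finite metric $(V,d)$, a depot $r$, and vehicles with speeds $\ge1$. A solution consists of tours from $r$ covering $V$, and its makespan is $\max_i d(\tau_i)/\lambda_i$. Here all speeds are powers of two, $\mu_j$ is the number of vehicles of speed $2^j$, and $\mu_{-1}=0$. Levels: $V_0=\{u:d(r,u)\le M\}$, and for $i\ge1$, $V_i=\{u:2^{i-1}M<d(r,u)\le2^iM\}$. Write $V_{\le i}=\bigcup_{j\le i}V_j$ and $V_{<i}=V_{\le i-1}$, with $V_{<0}=\emptyset$. $G$ is the complete graph on $V$ weighted by $d$. $G[U]$ is the induced subgraph, and $G/U$ contracts $U$ to a single vertex, keeping parallel edges. Level-Prim tree: $H_i$ is a minimum spanning tree of $G[V_{\le i}]/V_{<i}$, viewed as edges of $G$, and $\mathcal H=\bigcup_i H_i$. *)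

(* Defs.v *)
From HB Require Import structures.
From mathcomp Require Import all_boot all_order all_algebra.
Set Implicit Arguments. Unset Strict Implicit. Unset Printing Implicit Defensive.
Import Order.TTheory GRing.Theory Num.Theory.
Local Open Scope ring_scope.

Section HTSPDefs.
Variables (R : realFieldType) (T : finType).

Definition is_metric (d : T -> T -> R) : Prop :=
  [/\ forall x y, 0 <= d x y, forall x y, d x y = 0 <-> x = y,
      forall x y, d x y = d y x & forall x y z, d x z <= d x y + d y z].

Fixpoint walk_len (d : T -> T -> R) (x : T) (s : seq T) : R :=
  if s is y :: s' then d x y + walk_len d y s' else 0.

Definition tour_len (d : T -> T -> R) (r : T) (t : seq T) : R :=
  walk_len d r (rcons t r).

(* vehicle k has speed 2^(s k); tau k is its tour *)
Definition covers (r : T) (n : nat) (tau : 'I_n -> seq T) : Prop :=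
  forall v, v = r \/ exists k, v \in tau k.

Definition makespan_le (d : T -> T -> R) (r : T) (n : nat) (s : 'I_n -> nat)
  (tau : 'I_n -> seq T) (M : R) : Prop :=
  forall k, tour_len d r (tau k) / (2 ^+ s k) <= M.

Definition opt_le (d : T -> T -> R) (r : T) (n : nat) (s : 'I_n -> nat) (M : R) : Prop :=
  exists tau : 'I_n -> seq T, covers r tau /\ makespan_le d r s tau M.

Definition inV (d : T -> T -> R) (r : T) (M : R) (i : nat) (u : T) : bool :=
  if i is i'.+1 then (2 ^+ i' * M < d r u) && (d r u <= 2 ^+ i * M)
  else d r u <= M.
Definition inVle d r M (i : nat) (u : T) : bool := [exists j : 'I_i.+1, inV d r M j u].
Definition inVlt d r M (i : nat) (u : T) : bool := [exists j : 'I_i, inV d r M j u].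

(* contraction of V_{<i} to the single vertex None *)
Definition contr d r M (i : nat) (u : T) : option T :=
  if inVlt d r M i u then None else Some u.

(* adjacency in the (multi)graph with edge set E after applying c to endpoints;
   edges are undirected, the pair (u,v) just names the edge {u,v} of G *)
Definition cadj (c : T -> option T) (E : {set T * T}) : rel (option T) :=
  fun a b => [exists e in E,
     ((c e.1 == a) && (c e.2 == b)) || ((c e.1 == b) && (c e.2 == a))].

(* E (edges of G) is a spanning tree of G[V_{<=i}] / V_{<i}:
   edges lie in G[V_{<=i}], the contracted graph is connected on its vertex
   set {c x | x in V_{<=i}}, and it is acyclic (every edge is a bridge). *)
Definition spanning_tree_contr d r M (i : nat) (E : {set T * T}) : Prop :=
  let c := contr d r M i in
  [/\ forall e, e \in E -> inVle d r M i e.1 && inVle d r M i e.2,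
      forall x y, inVle d r M i x -> inVle d r M i y ->
        connect (cadj c E) (c x) (c y)
    & forall e, e \in E -> ~~ connect (cadj c (E :\ e)) (c e.1) (c e.2)].

Definition weight (d : T -> T -> R) (E : {set T * T}) : R := \sum_(e in E) d e.1 e.2.

Definition MST_contr d r M (i : nat) (E : {set T * T}) : Prop :=
  spanning_tree_contr d r M i E /\
  forall E', spanning_tree_contr d r M i E' -> weight d E <= weight d E'.

(* H i = H_i; the Level-Prim tree is the union of all H_i *)
Definition level_prim d r M (H : nat -> {set T * T}) : Prop :=
  forall i, MST_contr d r M i (H i).

Definition adjH (H : nat -> {set T * T}) (x y : T) : Prop :=
  exists i, (x, y) \in H i \/ (y, x) \in H i.

Definition leafH (H : nat -> {set T * T}) (x : T) : Prop :=
  exists y, adjH H x y /\ forall z, adjH H x z -> z = y.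

End HTSPDefs.

Definition mu (n : nat) (s : 'I_n -> nat) (j : nat) : nat := #|[set k | s k == j]|.

(* sum_{j >= i-1} 2^j mu_j  (with mu_{-1} = 0); all mu_j vanish for j > max speed *)
Definition tail_cap (n : nat) (s : 'I_n -> nat) (i : nat) : nat :=
  (\sum_(i.-1 <= j < (\max_(k < n) s k).+1) 2 ^ j * mu s j)%N.

(* Main.v *)
Require Import Defs.
From HB Require Import structures.
From mathcomp Require Import all_boot all_order all_algebra.
From Stdlib Require Import ClassicalEpsilon.
Import Order.TTheory GRing.Theory Num.Theory.
Local Open Scope ring_scope.
Set Implicit Arguments. Unset Strict Implicit. Unset Printing Implicit Defensive.

Section Basics.
Variables (R : realFieldType) (T : finType) (d : T -> T -> R) (r : T) (M : R).
Hypothesis dmet : is_metric d.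
Hypothesis Mpos : 0 < M.

Lemma d_ge0 x y : 0 <= d x y. Proof. by case: dmet. Qed.
Lemma d_sym x y : d x y = d y x. Proof. by case: dmet. Qed.
Lemma d_tri x y z : d x z <= d x y + d y z. Proof. by case: dmet. Qed.
Lemma d_xx x : d x x = 0. Proof. by case: dmet => _ h _ _; apply/h. Qed.

Lemma pow2M_le i j : (i <= j)%N -> 2 ^+ i * M <= 2 ^+ j * M.
Proof. move=> h; apply: ler_wpM2r; [exact: ltW | apply: ler_weXn2l => //; exact: ler1n]. Qed.

Lemma inV_le i u : inV d r M i u -> d r u <= 2 ^+ i * M.
Proof. by case: i => [|i] /=; [rewrite expr0 mul1r | case/andP]. Qed.
Lemma inV_gt i u : inV d r M i.+1 u -> 2 ^+ i * M < d r u.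
Proof. by case/andP. Qed.

Lemma inV_uniq i j u : inV d r M i u -> inV d r M j u -> i = j.
Proof.
wlog: i j / (i <= j)%N.
  move=> W hi hj; case: (leqP i j) => h; first exact: W.
  by apply/esym/W => //; apply/ltnW.
move=> hij hi hj; apply/eqP; rewrite eqn_leq hij /=.
case: j hij hj => [|j] // hij hj.
rewrite ltnNge; apply/negP => hle.
have h1 := inV_gt hj. have h2 := inV_le hi. have h3 := pow2M_le hle.
by have := lt_le_trans h1 (le_trans h2 h3); rewrite ltxx.
Qed.

Lemma inVleP i u : reflect (exists2 j, (j <= i)%N & inV d r M j u) (inVle d r M i u).
Proof.
apply: (iffP existsP) => [[j hj]|[j hj hv]]; first by exists j => //; rewrite -ltnS ltn_ord.
by exists (Ordinal (hj : (j < i.+1)%N)).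
Qed.
Lemma inVltP i u : reflect (exists2 j, (j < i)%N & inV d r M j u) (inVlt d r M i u).
Proof.
apply: (iffP existsP) => [[j hj]|[j hj hv]]; first by exists j => //; rewrite ltn_ord.
by exists (Ordinal hj).
Qed.

Lemma inV_lt i l u : inV d r M i u -> inVlt d r M l u = (i < l)%N.
Proof.
move=> hi; apply/inVltP/idP => [[j hj hv]|h]; last by exists i.
by rewrite (inV_uniq hi hv).
Qed.
Lemma inV_leE i l u : inV d r M i u -> inVle d r M l u = (i <= l)%N.
Proof.
move=> hi; apply/inVleP/idP => [[j hj hv]|h]; last by exists i.
by rewrite (inV_uniq hi hv).
Qed.

Lemma inVle_dist i u : inVle d r M i u -> d r u <= 2 ^+ i * M.
Proof. by case/inVleP=> j hj /inV_le h; apply: le_trans h (pow2M_le hj). Qed.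

Lemma dist_inVle i u : d r u <= 2 ^+ i * M -> inVle d r M i u.
Proof.
elim: i => [|i IH] h; first by apply/inVleP; exists 0%N => //=; rewrite expr0 mul1r in h.
case: (leP (d r u) (2 ^+ i * M)) => h'.
  by case/inVleP: (IH h') => j hj hv; apply/inVleP; exists j => //; apply: leqW.
by apply/inVleP; exists i.+1 => //=; rewrite h' h.
Qed.

Lemma inV0r : inV d r M 0 r.
Proof. by rewrite /= d_xx ltW. Qed.

Definition lev u : nat :=
  match excluded_middle_informative (exists i, inV d r M i u) with
  | left h => ex_minn h | right _ => 0%N end.

Lemma levE i u : inV d r M i u -> lev u = i.
Proof.
move=> hi; rewrite /lev; case: excluded_middle_informative => [h|[]]; last by exists i.
by case: ex_minnP => m hm _; exact: inV_uniq hm hi.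
Qed.

Lemma inVle_lev l u : inVle d r M l u -> inV d r M (lev u) u /\ (lev u <= l)%N.
Proof. by case/inVleP => j hj hv; rewrite (levE hv). Qed.

Lemma edge_lev H l e : level_prim d r M H -> e \in H l ->
  [/\ inVle d r M l e.1, inVle d r M l e.2 & ~~ (inVlt d r M l e.1 && inVlt d r M l e.2)].
Proof.
move=> /(_ l) [[h1 _ h3] _] he.
case/andP: (h1 e he) => -> ->; split=> //.
apply/negP=> /andP[a b]; move: (h3 e he); by rewrite /contr a b connect0.
Qed.

Lemma cadj_sym (c : T -> option T) (E : {set T * T}) : symmetric (cadj c E).
Proof. move=> a b; rewrite /cadj; apply: eq_existsb => e; by rewrite orbC. Qed.

Lemma cadjI (c : T -> option T) (E : {set T * T}) f u v : f \in E -> (f = (u, v) \/ f = (v, u)) -> cadj c E (c u) (c v).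
Proof.
move=> hf o; apply/existsP; exists f; rewrite hf /=.
by case: o => -> /=; rewrite !eqxx ?orbT.
Qed.

Lemma adj_lev H a b : level_prim d r M H -> adjH H a b ->
  exists l, exists f, [/\ f \in H l, (f = (a, b) \/ f = (b, a)),
    inV d r M (lev a) a, inV d r M (lev b) b &
    [/\ (lev a <= l)%N, (lev b <= l)%N & (l <= maxn (lev a) (lev b))%N]].
Proof.
move=> hH [l hab].
have [f [hf o]] : exists f, f \in H l /\ (f = (a, b) \/ f = (b, a)).
  by case: hab => h; [exists (a, b) | exists (b, a)]; split => //; [left|right].
exists l, f.
have [h1 h2 h3] := edge_lev hH hf.
have [A B] : inVle d r M l a /\ inVle d r M l b by case: o h1 h2 => -> /= -> ->.
have [la ha] := inVle_lev A; have [lb hb] := inVle_lev B.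
have C : ~~ (inVlt d r M l a && inVlt d r M l b) by case: o h3 => -> //=; rewrite andbC.
rewrite (inV_lt l la) (inV_lt l lb) negb_and -!leqNgt in C.
split=> //; split=> //; rewrite leq_max; by case/orP: C => ->; rewrite ?orbT.
Qed.


Lemma partA H p : level_prim d r M H -> uniq (r :: p) ->
  (forall k, (k.+1 < size (r :: p))%N -> adjH H (nth r (r :: p) k) (nth r (r :: p) k.+1)) ->
  forall k, (k.+1 < size (r :: p))%N ->
    (lev (nth r (r::p) k) <= lev (nth r (r::p) k.+1))%N.
Proof.
move=> hH hu hadj.
set s := r :: p.
elim/ltn_ind => k IH hk.
rewrite leqNgt; apply/negP => hlt.
set L := lev (nth r s k).
have hks : (k < size s)%N by apply: ltnW.
have chain : forall t, (t <= k)%N -> (lev (nth r s t) <= L)%N.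
  have chain' : forall n t, (t + n)%N = k -> (lev (nth r s t) <= L)%N.
    elim=> [|n IHn] t ht; first by rewrite addn0 in ht; rewrite ht.
    have htk : (t < k)%N by rewrite -ht addnS ltnS leq_addr.
    apply: leq_trans (IH t htk (leq_ltn_trans htk hks)) (IHn t.+1 _).
    by rewrite addSn -addnS.
  move=> t htk; apply: (chain' (k - t)%N); by rewrite subnKC.
have [l [f [hf o ha hb [la lb lmax]]]] := adj_lev hH (hadj k hk).
have lL : l = L.
  apply/eqP; rewrite eqn_leq la andbT; apply: leq_trans lmax _.
  by rewrite (maxn_idPl (ltnW hlt)).
rewrite lL in hf.
have L0 : (0 < L)%N by apply: leq_ltn_trans hlt.
set c := contr d r M L.
set E' := H L :\ f.
have [[_ _ hbr] _] := hH L.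
have hbridge := hbr f hf. rewrite -/c -/E' in hbridge.
have key : forall t, (t <= k)%N -> connect (cadj c E') (c r) (c (nth r s t)).
  elim=> [|t IHt] ht; first by rewrite connect0.
  have ht' : (t < k)%N := ht.
  apply: connect_trans (IHt (ltnW ht)) _.
  have hts : (t.+1 < size s)%N by apply: leq_ltn_trans ht hks.
  have [l' [f' [hf' o' hat hbt [la' lb' lmax']]]] := adj_lev hH (hadj t hts).
  have mono := IH t ht' hts.
  have up := chain t.+1 ht.
  case: (ltnP (lev (nth r s t.+1)) L) => hc.
    rewrite /c /contr (inV_lt L hat) (inV_lt L hbt) hc (leq_ltn_trans mono hc).
    exact: connect0.
  have eqL : lev (nth r s t.+1) = L by apply/eqP; rewrite eqn_leq up hc.
  have l'L : l' = L.
    apply/eqP; rewrite eqn_leq -{2}eqL lb' andbT; apply: leq_trans lmax' _.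
    by rewrite (maxn_idPr mono) eqL.
  rewrite l'L in hf'.
  apply: connect1; apply: (@cadjI c E' f') => //.
  rewrite in_setD1 hf' andbT; apply/eqP => eff.
  have n1 : nth r s k.+1 != nth r s t.
    by rewrite nth_uniq //; [rewrite gtn_eqF // ltnS ltnW | apply: ltnW].
  have n2 : nth r s k.+1 != nth r s t.+1.
    by rewrite nth_uniq // gtn_eqF.
  case: o => ho; case: o' => ho'; rewrite ho' in eff; rewrite -eff in ho.
  - by case/negP: n2; apply/eqP; exact: esym (congr1 snd ho).
  - by case/negP: n1; apply/eqP; exact: esym (congr1 snd ho).
  - by case/negP: n1; apply/eqP; exact: esym (congr1 fst ho).
  - by case/negP: n2; apply/eqP; exact: esym (congr1 fst ho).
have ck := key k (leqnn k).
have cr : c r = c (nth r s k.+1).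
  by rewrite /c /contr (inV_lt L inV0r) (inV_lt L hb) L0 hlt.
rewrite cr in ck.
have ck' : connect (cadj c E') (c (nth r s k)) (c (nth r s k.+1)).
  by rewrite (sym_connect_sym (cadj_sym c E')).
case: o hbridge => -> /=; by rewrite ?ck ?ck'.
Qed.


Fixpoint wsum (c : T -> T -> R) (x : T) (s : seq T) : R :=
  if s is y :: s' then c x y + wsum c y s' else 0.

Lemma walk_lenE x s : walk_len d x s = wsum d x s.
Proof. by elim: s x => //= y s IH x; rewrite IH. Qed.

Lemma wsum_cat c x s1 s2 : wsum c x (s1 ++ s2) = wsum c x s1 + wsum c (last x s1) s2.
Proof. by elim: s1 x => [|y s IH] x /=; rewrite ?add0r // IH addrA. Qed.

Lemma wsum_ge0 c x s : (forall a b, 0 <= c a b) -> 0 <= wsum c x s.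
Proof. by move=> h; elim: s x => //= y s IH x; rewrite addr_ge0. Qed.

Lemma wsum_le c1 c2 x s : (forall a b, c1 a b <= c2 a b) -> wsum c1 x s <= wsum c2 x s.
Proof. by move=> h; elim: s x => //= y s IH x; rewrite lerD. Qed.

Lemma wsum_tri x s : d x (last x s) <= wsum d x s.
Proof.
elim: s x => [|y s IH] x /=; first by rewrite d_xx.
by apply: le_trans (d_tri x y (last y s)) _; rewrite lerD2l.
Qed.

Lemma wsum_abs (f : T -> R) x s : `|f x - f (last x s)| <= wsum (fun a b => `|f a - f b|) x s.
Proof.
elim: s x => [|y s IH] x /=; first by rewrite subrr normr0.
apply: le_trans (ler_distD (f y) (f x) (f (last y s))) _.
by rewrite lerD2l.
Qed.

Lemma wsum_sum N (c : nat -> T -> T -> R) x s :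
  \sum_(j < N) wsum (c j) x s = wsum (fun a b => \sum_(j < N) c j a b) x s.
Proof.
elim: s x => [|y s IH] x /=; first by rewrite big1.
by rewrite big_split /= IH.
Qed.

Lemma wsum_scale k c x s : wsum (fun a b => k * c a b) x s = k * wsum c x s.
Proof. by elim: s x => [|y s IH] x /=; rewrite ?mulr0 // IH mulrDr. Qed.

Lemma wsum0 c x s : (forall a b, c a b = 0) -> wsum c x s = 0.
Proof. by move=> h; elim: s x => //= y s IH x; rewrite h IH addr0. Qed.

Definition mn (x a : R) := if x <= a then x else a.

Lemma mn_le x a : mn x a <= a.
Proof. by rewrite /mn; case: ifP. Qed.
Lemma mn_lex x a : mn x a <= x.
Proof. by rewrite /mn; case: ifP => // /negbT; rewrite -ltNge => /ltW. Qed.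
Lemma mn_mono x y a : x <= y -> mn x a <= mn y a.
Proof.
move=> h; rewrite /mn; case: ifP => hx; case: ifP => hy //.
  by rewrite (le_trans h hy) in hx.
Qed.
Lemma mn_ge x a b : b <= x -> b <= a -> b <= mn x a.
Proof. by move=> h1 h2; rewrite /mn; case: ifP. Qed.

Lemma mn_lip x y a : x <= y -> mn y a - mn x a <= y - x.
Proof.
move=> h; rewrite /mn; case: ifP => hy; case: ifP => hx.
- by [].
- by rewrite (le_trans h hy) in hx.
- by apply: lerB => //; apply: ltW; rewrite ltNge hy.
- by rewrite subrr subr_ge0.
Qed.

Lemma mn_dif x y a b : x <= y -> a <= b -> mn y a - mn x a <= mn y b - mn x b.
Proof.
move=> h hab; rewrite {1 2}/mn; case: ifP => hy.
  have hx := le_trans h hy.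
  rewrite hx /mn (le_trans hy hab) (le_trans hx hab) //.
case: ifP => hx.
  rewrite /mn (le_trans hx hab); apply: lerB => //.
  by apply: mn_ge => //; apply: ltW; rewrite ltNge hy.
by rewrite subrr subr_ge0; apply: mn_mono.
Qed.

Definition gj (j : nat) (x : R) := mn x (2 ^+ j.+1 * M) - mn x (2 ^+ j * M).

Lemma sub4 (a b c e : R) : (a - b <= c - e) = (e - b <= c - a).
Proof. by rewrite !lerBrDr addrAC [e - b + a]addrAC (addrC a e). Qed.

Lemma swap4 (a b c e : R) : (a - b) - (c - e) = (a - c) - (b - e).
Proof. by rewrite !opprB addrACA [RHS]addrACA [- c + _]addrC. Qed.

Lemma gj_mono j x y : x <= y -> gj j x <= gj j y.
Proof.
move=> h; rewrite /gj sub4; apply: mn_dif => //.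
by apply: pow2M_le.
Qed.

Lemma gj_low j x : x <= 2 ^+ j * M -> gj j x = 0.
Proof.
move=> h; rewrite /gj /mn h (le_trans h (pow2M_le (leqnSn j))) subrr //.
Qed.

Lemma two_pow j : 2 ^+ j.+1 * M = 2 ^+ j * M + 2 ^+ j * M.
Proof. by rewrite exprS -mulrA mulrDl mul1r. Qed.

Lemma gj_high j x : 2 ^+ j.+1 * M <= x -> gj j x = 2 ^+ j * M.
Proof.
move=> h; have h' : 2 ^+ j * M <= x := le_trans (pow2M_le (leqnSn j)) h.
have e1 : mn x (2 ^+ j.+1 * M) = 2 ^+ j.+1 * M.
  by rewrite /mn; case: ifP => // hx; apply/eqP; rewrite eq_le hx h.
have e2 : mn x (2 ^+ j * M) = 2 ^+ j * M.
  by rewrite /mn; case: ifP => // hx; apply/eqP; rewrite eq_le hx h'.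
by rewrite /gj e1 e2 two_pow addrK.
Qed.

Lemma gj_sum N x y : \sum_(j < N) `|gj j x - gj j y| <= `|x - y|.
Proof.
wlog h : x y / x <= y.
  move=> W; case: (leP x y) => h; first exact: W.
  rewrite distrC; under eq_bigr do rewrite distrC. by apply: W; apply: ltW.
pose D a := mn y a - mn x a.
have step : forall j, `|gj j x - gj j y| = D (2 ^+ j.+1 * M) - D (2 ^+ j * M).
  move=> j; rewrite distrC ger0_norm ?subr_ge0 ?gj_mono //.
  by rewrite /gj /D swap4.
have tel : \sum_(j < N) `|gj j x - gj j y| = D (2 ^+ N * M) - D M.
  elim: N => [|N IH]; first by rewrite big_ord0 expr0 mul1r subrr.
  by rewrite big_ord_recr /= IH step addrC addrA subrK.
rewrite tel distrC ger0_norm ?subr_ge0 //.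
apply: le_trans _ (mn_lip (2 ^+ N * M) h); rewrite /D lerBlDr lerDl subr_ge0; exact: mn_mono.
Qed.

Lemma inVlt_le l u : inVlt d r M l u -> inVle d r M l u.
Proof. by case/inVltP => j hj hv; apply/inVleP; exists j => //; apply: ltnW. Qed.
Lemma inVle_S l u : inVle d r M l u -> inVle d r M l.+1 u.
Proof. by case/inVleP => j hj hv; apply/inVleP; exists j => //; apply: leqW. Qed.
Lemma notinV_lt j u : inVle d r M j u -> ~~ inV d r M j u -> inVlt d r M j u.
Proof.
move=> /inVle_lev [hv hl] hn; rewrite (inV_lt j hv) ltn_neqAle hl andbT.
by apply: contra hn => /eqP <-.
Qed.

Definition cnd j a b := inV d r M j a || inV d r M j b.
Definition gc j a b := if cnd j a b then d a b else 0.
Definition ind j a b := [&& inVle d r M j.+1 a, inVle d r M j.+1 b &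
   ~~ (inVlt d r M j a && inVlt d r M j b)].
Definition indc j a b := if ind j a b then d a b else 0.
Definition rad j a b := `|gj j (d r a) - gj j (d r b)|.
Definition ch j a b := indc j a b + rad j a b.

Lemma indc_ge0 j a b : 0 <= indc j a b.
Proof. by rewrite /indc; case: ifP => // _; exact: d_ge0. Qed.
Lemma ch_ge0 j a b : 0 <= ch j a b.
Proof. by apply: addr_ge0; [exact: indc_ge0 | exact: normr_ge0]. Qed.
Lemma ch_ge_rad j a b : rad j a b <= ch j a b.
Proof. by rewrite /ch lerDr indc_ge0. Qed.
Lemma ch_ge_ind j a b : indc j a b <= ch j a b.
Proof. by rewrite /ch lerDl /rad normr_ge0. Qed.

Lemma gapA j y I x : inVle d r M j.+1 x ->
  all (fun u => inVle d r M j.+1 u && ~~ inVlt d r M j u) I ->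
  inVle d r M j.+1 y -> [|| ~~ inVlt d r M j x, ~~ inVlt d r M j y | I != [::]] ->
  d x y <= wsum (indc j) x (rcons I y).
Proof.
elim: I x => [|u I IH] x hx hI hy hc /=.
  move: hc; rewrite /= orbF -negb_and => hc.
  by rewrite addr0 /indc /ind hx hy hc.
case/andP: hI => /andP[hu hu'] hI.
have -> : indc j x u = d x u by rewrite /indc /ind hx hu /= negb_and hu' orbT.
apply: le_trans (d_tri x u y) _; rewrite lerD2l; apply: IH => //.
by rewrite hu'.
Qed.

Lemma gap j x I y : inVle d r M j x -> all (fun u => ~~ inVle d r M j u) I ->
  inVle d r M j y -> gc j x y <= wsum (ch j) x (rcons I y).
Proof.
move=> hx hI hy; rewrite /gc; case: ifP => hc; last exact: wsum_ge0 (@ch_ge0 j).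
case: (boolP (all (inVle d r M j.+1) I)) => hA.
  apply: le_trans _ (wsum_le x (rcons I y) (@ch_ge_ind j)).
  apply: gapA; rewrite ?inVle_S //.
    apply/allP => u hu; rewrite (allP hA u hu) /=.
    by apply: contra (allP hI u hu); exact: inVlt_le.
  by case/orP: hc => h; rewrite (inV_lt j h) ltnn ?orbT.
case/allPn: hA => z hz hz'.
have hz2 : 2 ^+ j.+1 * M <= d r z.
  by apply: ltW; rewrite ltNge; apply: contra hz'; exact: dist_inVle.
case/splitPr: hz => I1 I2.
apply: le_trans _ (wsum_le x _ (@ch_ge_rad j)).
rewrite rcons_cat /= -cat_rcons wsum_cat last_rcons.
have h1 := wsum_abs (fun u => gj j (d r u)) x (rcons I1 z).
have h2 := wsum_abs (fun u => gj j (d r u)) z (rcons I2 y).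
rewrite last_rcons /= in h1. rewrite last_rcons /= in h2.
rewrite (gj_low (inVle_dist hx)) (gj_high hz2) sub0r normrN in h1.
rewrite (gj_low (inVle_dist hy)) (gj_high hz2) subr0 in h2.
have hc0 : 0 <= 2 ^+ j * M by rewrite mulr_ge0 ?exprn_ge0 // ltW.
rewrite ger0_norm // in h1. rewrite ger0_norm // in h2.
apply: le_trans (lerD h1 h2).
apply: le_trans (d_tri x r y) _; rewrite d_sym.
by apply: lerD; apply: inVle_dist.
Qed.

Lemma walkL j s I x : inVle d r M j x -> all (fun u => ~~ inVle d r M j u) I ->
  wsum (gc j) x (filter (inVle d r M j) s) <= wsum (ch j) x (I ++ s).
Proof.
elim: s I x => [|y s IH] I x hx hI /=.
  by apply: wsum_ge0; exact: ch_ge0.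
case: ifP => hy /=.
  rewrite -cat_rcons wsum_cat last_rcons; apply: lerD; first exact: gap.
  exact: (IH [::]).
rewrite -cat_rcons; apply: IH => //; by rewrite all_rcons hy hI.
Qed.

Lemma ifle (b1 b2 : bool) (D : R) : 0 <= D -> (b1 -> b2) -> (if b1 then D else 0) <= (if b2 then D else 0).
Proof. by case: b1; case: b2 => // h1 h2; have := h2 isT. Qed.

Lemma ind_sum N a b : \sum_(j < N) indc j a b <=
  (if inVle d r M N a && inVle d r M N b then d a b else 0) +
  (if inVlt d r M N a && inVlt d r M N b then d a b else 0).
Proof.
have hD := d_ge0 a b.
elim: N => [|N IH].
  by rewrite big_ord0; apply: addr_ge0; case: ifP => _; rewrite ?lexx.
rewrite big_ord_recr /=; rewrite /indc in IH *.
case: ifP => hi.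
  case/and3P: hi => ha hb hn; rewrite ha hb /=.
  rewrite (negbTE hn) addr0 in IH.
  rewrite addrC lerD2l; apply: le_trans IH _.
  exact: ifle.
rewrite addr0; apply: le_trans IH _; apply: lerD; apply: ifle => //.
  by case/andP => h1 h2; apply/andP; split; apply: inVle_S.
by case/andP => h1 h2; apply/andP; split; apply: inVlt_le.
Qed.

Lemma dist_diff a b : `|d r a - d r b| <= d a b.
Proof.
rewrite ler_norml; apply/andP; split.
  rewrite lerNl opprB lerBlDr addrC; exact: d_tri.
rewrite lerBlDr addrC (d_sym a b); exact: d_tri.
Qed.

Lemma ch_sum N a b : \sum_(j < N) ch j a b <= d a b *+ 3.
Proof.
rewrite big_split /= mulrSr mulr2n; apply: lerD.
  apply: le_trans (ind_sum N a b) _; apply: lerD; case: ifP => // _; exact: d_ge0.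
apply: le_trans (gj_sum N (d r a) (d r b)) (dist_diff a b).
Qed.

Lemma wsum_muln c n x s : wsum (fun a b => c a b *+ n) x s = wsum c x s *+ n.
Proof. by elim: s x => [|y s IH] x /=; rewrite ?mul0rn // IH mulrnDl. Qed.

Lemma vehicle N tau : \sum_(j < N) wsum (gc j) r (filter (inVle d r M j) (rcons tau r))
   <= tour_len d r tau *+ 3.
Proof.
rewrite /tour_len walk_lenE -wsum_muln.
apply: le_trans (wsum_le r _ (fun a b => ch_sum N a b)).
rewrite -wsum_sum; apply: ler_sum => j _.
have hr : inVle d r M j r by rewrite (inV_leE j inV0r).
exact: (@walkL j (rcons tau r) [::] r hr isT).
Qed.

Fixpoint prs (x : T) (s : seq T) : seq (T * T) :=
  if s is y :: s' then (x, y) :: prs y s' else [::].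

Lemma wsum_prs c x s : wsum c x s = \sum_(e <- prs x s) c e.1 e.2.
Proof. by elim: s x => [|y s IH] x /=; rewrite ?big_nil // big_cons IH. Qed.

Lemma prs_mem x s e : e \in prs x s -> (e.1 \in x :: s) && (e.2 \in s).
Proof.
elim: s x => [|y s IH] x //=; rewrite inE => /orP [/eqP -> | /IH /andP [h1 h2]].
  by rewrite /= !inE !eqxx.
by rewrite in_cons h1 orbT /= in_cons h2 orbT.
Qed.

Lemma sum_set_list (f : T * T -> R) (S : {set T * T}) l : (forall e, 0 <= f e) ->
  (forall e, e \in S -> e \in l) -> \sum_(e in S) f e <= \sum_(e <- l) f e.
Proof.
move=> hf; elim: l S => [|a l IH] S hS.
  rewrite big_nil big_pred0 // => e; apply/negbTE/negP => /hS.
  by rewrite in_nil.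
rewrite big_cons; case: (boolP (a \in S)) => ha.
  rewrite (bigD1 a) //=; rewrite lerD2l.
  have -> : \sum_(i in S | i != a) f i = \sum_(i in S :\ a) f i.
    by apply: eq_bigl => e; rewrite in_setD1 andbC.
  apply: IH => e; rewrite in_setD1 => /andP [h1 h2].
  by move: (hS e h2); rewrite inE (negbTE h1).
apply: le_trans (IH S _) _.
  move=> e he; move: (hS e he); rewrite inE => /orP [/eqP hq|//].
  by rewrite -hq he in ha.
by rewrite lerDr.
Qed.

Definition Wk (tau : seq T) j := filter (inVle d r M j) (rcons tau r).
Definition Lj n (tau : 'I_n -> seq T) j : seq (T * T) :=
  flatten [seq [seq e <- prs r (Wk (tau k) j) | cnd j e.1 e.2] | k <- index_enum 'I_n].

Lemma Lj_sum n (tau : 'I_n -> seq T) j :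
  \sum_(e <- Lj tau j) d e.1 e.2 = \sum_(k < n) wsum (gc j) r (Wk (tau k) j).
Proof.
rewrite /Lj big_flatten /= big_map; apply: eq_bigr => k _.
by rewrite big_filter big_mkcond wsum_prs.
Qed.

Lemma Lj_mem n (tau : 'I_n -> seq T) j e :
  e \in Lj tau j <-> exists k, (e \in prs r (Wk (tau k) j)) /\ cnd j e.1 e.2.
Proof.
split.
  case/flattenP => l /mapP [k _ ->]; rewrite mem_filter => /andP [h1 h2].
  by exists k.
case=> k [h1 h2]; apply/flattenP; exists [seq e <- prs r (Wk (tau k) j) | cnd j e.1 e.2].
  by apply/mapP; exists k => //; rewrite mem_index_enum.
by rewrite mem_filter h1 h2.
Qed.

Lemma walk_conn j (E : {set T * T}) x s : inVle d r M j x -> all (inVle d r M j) s ->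
  (forall e, e \in prs x s -> cnd j e.1 e.2 -> e \in E) ->
  forall w, w \in x :: s ->
    connect (cadj (contr d r M j) E) (contr d r M j x) (contr d r M j w).
Proof.
elim: s x => [|y s IH] x hx hs hE w.
  by rewrite inE => /eqP ->; exact: connect0.
rewrite inE => /orP [/eqP -> | hw]; first exact: connect0.
case/andP: hs => hy hs.
apply: connect_trans (IH y hy hs _ w hw).
  case: (boolP (cnd j x y)) => hc.
    apply: connect1; apply: cadjI (or_introl erefl).
    by apply: hE; rewrite //= inE eqxx.
  rewrite /cnd negb_or in hc; case/andP: hc => hnx hny.
  by rewrite /contr (notinV_lt hx hnx) (notinV_lt hy hny) connect0.
by move=> e he; apply: hE; rewrite /= inE he orbT.
Qed.

Definition Fj n (tau : 'I_n -> seq T) j : {set T * T} := [set e | e \in Lj tau j].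

Lemma Fj_span n (tau : 'I_n -> seq T) j : covers r tau ->
  (forall e, e \in Fj tau j -> inVle d r M j e.1 && inVle d r M j e.2) /\
  (forall x y, inVle d r M j x -> inVle d r M j y ->
     connect (cadj (contr d r M j) (Fj tau j)) (contr d r M j x) (contr d r M j y)).
Proof.
move=> hcov.
have hr : inVle d r M j r by rewrite (inV_leE j inV0r).
split.
  move=> e; rewrite inE => /Lj_mem [k [he _]].
  case/andP: (prs_mem he) => h1 h2.
  have hW : forall u, u \in Wk (tau k) j -> inVle d r M j u.
    by move=> u; rewrite mem_filter => /andP [].
  rewrite (hW _ h2) andbT; move: h1; rewrite inE => /orP [/eqP -> // | /hW //].
set c := contr d r M j.
have key : forall x, inVle d r M j x -> connect (cadj c (Fj tau j)) (c r) (c x).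
  move=> x hx; case: (boolP (inV d r M j x)) => hv.
    case: (hcov x) => [-> | [k hk]]; first exact: connect0.
    apply: (@walk_conn j (Fj tau j) r (Wk (tau k) j) hr).
    - by apply/allP => u; rewrite mem_filter => /andP [].
    - move=> e he hc; rewrite inE; apply/Lj_mem; by exists k.
    - by rewrite inE mem_filter hx mem_rcons inE hk orbT orbT.
  have hl := notinV_lt hx hv.
  have j0 : (0 < j)%N by case/inVltP: (hl) => i hi _; exact: leq_ltn_trans (leq0n i) hi.
  by rewrite /c /contr hl (inV_lt j inV0r) j0 connect0.
move=> x y hx hy.
apply: connect_trans (key y hy).
by rewrite (sym_connect_sym (cadj_sym c (Fj tau j))); apply: key.
Qed.

Lemma st_extract j (F : {set T * T}) :
  (forall e, e \in F -> inVle d r M j e.1 && inVle d r M j e.2) ->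
  (forall x y, inVle d r M j x -> inVle d r M j y ->
     connect (cadj (contr d r M j) F) (contr d r M j x) (contr d r M j y)) ->
  exists2 E : {set T * T}, E \subset F & spanning_tree_contr d r M j E.
Proof.
move=> hF hC.
set c := contr d r M j.
pose Pb (E : {set T * T}) := (E \subset F) && [forall x, forall y,
   inVle d r M j x ==> inVle d r M j y ==> connect (cadj c E) (c x) (c y)].
have PF : Pb F.
  rewrite /Pb subxx /=; apply/forallP => x; apply/forallP => y.
  by apply/implyP => hx; apply/implyP => hy; exact: hC.
case: (arg_minnP (fun E : {set T * T} => #|E|) PF) => E /andP [hEF /forallP hEc] hmin.
have hEc' : forall x y, inVle d r M j x -> inVle d r M j y -> connect (cadj c E) (c x) (c y).
  by move=> x y hx hy; move/forallP: (hEc x) => /(_ y) /implyP /(_ hx) /implyP /(_ hy).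
exists E => //; split.
- by move=> e he; apply: hF; exact: (subsetP hEF).
- exact: hEc'.
- move=> e he; apply/negP => hb.
  have sub : forall a b, cadj c E a b -> connect (cadj c (E :\ e)) a b.
    move=> a b /existsP [f /andP [hf ho]].
    case: (eqVneq f e) => [hfe | hfe].
      rewrite hfe in ho.
      case/orP: ho => /andP [/eqP h1 /eqP h2]; rewrite -h1 -h2 //.
      by rewrite (sym_connect_sym (cadj_sym c (E :\ e))).
    apply: connect1; apply/existsP; exists f; by rewrite in_setD1 hfe hf ho.
  have PE : Pb (E :\ e).
    rewrite /Pb (subset_trans (subD1set E e) hEF) /=.
    apply/forallP => x; apply/forallP => y; apply/implyP => hx; apply/implyP => hy.
    exact: (connect_sub sub (hEc' x y hx hy)).
  have := hmin _ PE; rewrite (cardsD1 e E) he /=.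
  by rewrite add1n ltnn.
Qed.

Lemma level_bound H n (tau : 'I_n -> seq T) j : level_prim d r M H -> covers r tau ->
  weight d (H j) <= \sum_(k < n) wsum (gc j) r (Wk (tau k) j).
Proof.
move=> hH hcov.
have [h1 h2] := Fj_span j hcov.
have [E hEF hE] := st_extract h1 h2.
have [_ hmin] := hH j.
apply: le_trans (hmin E hE) _.
rewrite -Lj_sum; apply: sum_set_list => [e|e he]; first exact: d_ge0.
by have := subsetP hEF e he; rewrite inE.
Qed.

Lemma tour_ge tau u : u \in tau -> d r u + d r u <= tour_len d r tau.
Proof.
case/splitPr => t1 t2.
rewrite /tour_len walk_lenE rcons_cat /= -cat_rcons wsum_cat last_rcons.
apply: lerD.
  by have := wsum_tri r (rcons t1 u); rewrite last_rcons.
by have := wsum_tri u (rcons t2 r); rewrite last_rcons (d_sym u r).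
Qed.

Lemma wsum_gc0 j x s : (forall u, u \in x :: s -> ~~ inV d r M j u) -> wsum (gc j) x s = 0.
Proof.
elim: s x => [|y s IH] x h //=.
have hx : ~~ inV d r M j x by apply: h; rewrite inE eqxx.
have hy : ~~ inV d r M j y by apply: h; rewrite !inE eqxx orbT.
rewrite /gc /cnd (negbTE hx) (negbTE hy) /= add0r; apply: IH => u hu; apply: h.
by rewrite inE hu orbT.
Qed.

Lemma gs0 tau j m : tour_len d r tau <= 2 ^+ m * M -> (m < j)%N ->
  wsum (gc j) r (Wk tau j) = 0.
Proof.
move=> ht hmj; apply: wsum_gc0 => u.
have nr : ~~ inV d r M j r.
  by apply/negP => hv; have h0 := inV_uniq inV0r hv; rewrite -h0 in hmj.
rewrite inE => /orP [/eqP -> //| ].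
rewrite mem_filter mem_rcons inE => /andP [_ /orP [/eqP -> // | hu]].
apply/negP => hv.
case: j hmj hv nr => [//|j] hmj hv _.
have h1 := inV_gt hv.
have h2 := tour_ge hu.
have : d r u <= 2 ^+ j * M.
  have hmj' : (m <= j)%N by [].
  have h3 := le_trans ht (pow2M_le hmj').
  apply: le_trans h3; apply: le_trans h2; rewrite lerDl; exact: d_ge0.
by rewrite leNgt h1.
Qed.

Lemma sum_if_eq (l : seq nat) x (v : nat) : uniq l ->
  (\sum_(j <- l) (if x == j then v else 0) = if x \in l then v else 0)%N.
Proof.
elim: l => [|a l IH] /=; first by rewrite big_nil.
case/andP => ha hu; rewrite big_cons IH // inE.
case: (x =P a) => [-> | _] /=; last by [].
by rewrite (negbTE ha) addn0.
Qed.

Lemma tail_capE n (s : 'I_n -> nat) i :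
  tail_cap s i = (\sum_(k < n) if (i.-1 <= s k)%N then 2 ^ s k else 0)%N.
Proof.
rewrite /tail_cap.
have hmu : forall j, (2 ^ j * mu s j = \sum_(k < n) if s k == j then 2 ^ s k else 0)%N.
  move=> j; rewrite /mu -sum1_card big_distrr /= big_mkcond.
  by apply: eq_bigr => k _; rewrite inE muln1; case: eqP => [-> |].
rewrite (eq_bigr _ (fun j _ => hmu j)) exchange_big /=; apply: eq_bigr => k _.
rewrite sum_if_eq; last by rewrite /index_iota iota_uniq.
by rewrite mem_index_iota ltnS leq_bigmax andbT.
Qed.

Lemma fin8 m : 2 ^+ m * M *+ 3 <= 8 * M * (2 ^ m)%:R.
Proof.
rewrite natrX -mulrA mulr_natl (mulrC M).
have h0 : 0 <= 2 ^+ m * M by rewrite mulr_ge0 ?exprn_ge0 // ltW.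
have -> : (8 = 3 + 5)%N by [].
by rewrite mulrnDr lerDl mulrn_wge0.
Qed.

Lemma partB n (s : 'I_n -> nat) H : opt_le d r s M -> level_prim d r M H ->
  forall i N : nat, \sum_(i <= j < N) weight d (H j) <= 8 * M * (tail_cap s i)%:R.
Proof.
move=> [tau [hcov hmk]] hH i N.
pose gs k j := wsum (gc j) r (Wk (tau k) j).
have gs_ge0 : forall k j, 0 <= gs k j.
  by move=> k j; apply: wsum_ge0 => a b; rewrite /gc; case: ifP => _; rewrite ?lexx ?d_ge0.
have htour : forall k, tour_len d r (tau k) <= 2 ^+ s k * M.
  by move=> k; have := hmk k; rewrite ler_pdivrMr ?exprn_gt0 // mulrC.
have st1 : \sum_(i <= j < N) weight d (H j) <= \sum_(i <= j < N) \sum_(k < n) gs k j.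
  by apply: ler_sum => j _; exact: level_bound.
apply: le_trans st1 _.
rewrite exchange_big /=.
have st2 : \sum_(k < n) \sum_(i <= j < N) gs k j <=
    \sum_(k < n) (if (i.-1 <= s k)%N then (2 ^+ s k * M) *+ 3 else 0).
  apply: ler_sum => k _; case: ifP => hk.
    have st3 : \sum_(i <= j < N) gs k j <= \sum_(0 <= j < N) gs k j.
      case: (leqP i N) => hiN.
        rewrite (@big_cat_nat _ _ _ i 0 N _ _ (leq0n i) hiN) lerDr; apply: sumr_ge0 => j _; exact: (gs_ge0 k j).
      have -> : \sum_(i <= j < N) gs k j = 0 by apply: big_geq; exact: ltnW.
      by apply: sumr_ge0 => j _; exact: (gs_ge0 k j).
    apply: le_trans st3 _.
    rewrite big_mkord; apply: le_trans (vehicle N (tau k)) _.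
    by rewrite lerMn2r htour orbT.
  rewrite big_nat_cond big1; first exact: lexx.
  move=> j /andP [/andP [hij _] _].
  apply: (gs0 (htour k)).
  have hk' : (s k < i.-1)%N by rewrite ltnNge hk.
  exact: leq_trans hk' (leq_trans (leq_pred i) hij).
apply: le_trans st2 _.
rewrite tail_capE natr_sum mulr_sumr; apply: ler_sum => k _.
case: ifP => _; last by rewrite mulr0.
exact: fin8.
Qed.

Lemma corollary4_sec n (s : 'I_n -> nat) (H : nat -> {set T * T}) :
  opt_le d r s M -> level_prim d r M H ->
  (forall p : seq T, uniq (r :: p) ->
     (forall k, (k.+1 < size (r :: p))%N ->
        adjH H (nth r (r :: p) k) (nth r (r :: p) k.+1)) ->
     leafH H (last r p) ->
     forall k, (k.+1 < size (r :: p))%N ->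
       forall i j, inV d r M i (nth r (r :: p) k) ->
                   inV d r M j (nth r (r :: p) k.+1) -> (i <= j)%N)
  /\
  (forall i N : nat,
     \sum_(i <= j < N) weight d (H j) <= 8 * M * (tail_cap s i)%:R).
Proof.
move=> hopt hH; split; last exact: partB.
move=> p hu hadj _ k hk i j hi hj.
have := partA hH hu hadj hk.
by rewrite (levE hi) (levE hj).
Qed.

End Basics.

Unset Implicit Arguments.

Theorem corollary4 (R : realFieldType) (T : finType) (d : T -> T -> R) (r : T)
  (n : nat) (s : 'I_n -> nat) (M : R) (H : nat -> {set T * T}) :
  is_metric d -> 0 < M -> opt_le d r s M -> level_prim d r M H ->
  (forall p : seq T, uniq (r :: p) ->
     (forall k, (k.+1 < size (r :: p))%N ->
        adjH H (nth r (r :: p) k) (nth r (r :: p) k.+1)) ->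
     leafH H (last r p) ->
     forall k, (k.+1 < size (r :: p))%N ->
       forall i j, inV d r M i (nth r (r :: p) k) ->
                   inV d r M j (nth r (r :: p) k.+1) -> (i <= j)%N)
  /\
  (forall i N : nat,
     \sum_(i <= j < N) weight d (H j) <= 8 * M * (tail_cap s i)%:R).
Proof. move=> hm hM; exact: corollary4_sec. Qed.
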